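(* Let $z$ be a positive integer and let $C$ be a quasi-cyclic LDPC code with circulant matrices of size $z$ whose base matrix is the $12\times 24$ matrix $H_{b(1/2)}$ below. Then there is no quasi-cyclic LDPC code $D$ of type IEEE802.16e with circulant matrices of size $z$ such that (i) the parity-check matrices $H_C$ and $H_D$ have the same row-weight distribution, (ii) every column of $H_D$ has Hamming weight at least $2$, and (iii) $D^{\perp}\subset C$. The rows of $H_{b(1/2)}$ are: 011000001100110000000000, 010001110001011000000000, 000111010001001100000000, 101000001100000110000000, 001000100110000011000000, 000011010001100001100000, 001100000110000000110000, 011000100100000000011000, 100011010001000000001100, 000001010011000000000110, 001100001100000000000011, 100001010001100000000001.
   Context: All codes are binary linear codes over $\mathbb{F}_2$; $D^{\perp}=\{d' : d\,d'^T=0\ \forall d\in D\}$. For a positive integer $z$, $I_z(1)$ is the $z\times z$ circulant permutation matrix of one circular right shift and $I_z(b)=I_z(1)^b$. A quasi-cyclic LDPC code with circulant matrices of size $z$ is given by a $J\times L$ model matrix with entries in $\{0,\dots,z-1\}\cup\{\infty\}$; its parity-check matrix $H$ is obtained by replacing each finite entry $p$ by $I_z(p)$ and each $\infty$ by the $z\times z$ zero matrix, and the code is $\{x\in\mathbb{F}_2^{zL}:Hx^T=0\}$. Its base matrix $H_b$ is the binary $J\times L$ matrix with $1$ exactly where the model entry is finite. The row-weight distribution of a binary matrix is, for each $w$, the number of rows of Hamming weight $w$. A quasi-cyclic LDPC code is of type IEEE802.16e if its base matrix has the form $H_b=[H_{b1}\mid h_b\mid H'_{b2}]$, where $H_{b1}$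 is $J\times(L-J)$ arbitrary, $h_b=(h_b(0),\dots,h_b(J-1))^T$ is a column of weight $3$ with $h_b(0)=h_b(J-1)=1$ and $h_b(j)=1$ for exactly one $0<j<J-1$, and $H'_{b2}$ is the $J\times(J-1)$ dual-diagonal matrix with entries $1$ at positions $(i,i)$ and $(i+1,i)$ and $0$ elsewhere; moreover, in the model matrix every $1$ of $H'_{b2}$ has shift $0$, and the top and bottom $1$'s of $h_b$ have equal shift sizes while the middle $1$ of $h_b$ has its own (unpaired) shift size. The matrix $H_{b(1/2)}$ is the base matrix of the rate-$1/2$ LDPC codes of the IEEE802.16e standard. *)

(* Defs.v *)
From mathcomp Require Import all_boot all_algebra.
Set Implicit Arguments. Unset Strict Implicit. Unset Printing Implicit Defensive.
Import GRing.Theory.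
Local Open Scope ring_scope.

(* A model matrix: entries in {0,..,z-1} u {oo}, with None standing for oo. *)
Definition model_matrix (z J L : nat) := 'M[option 'I_z]_(J, L).

Lemma blk_proof (J z : nat) (i : 'I_(J * z)) : (i %/ z < J)%N.
Proof.
case: i => i /=; case: z => [|z]; first by rewrite muln0.
by move=> H; rewrite ltn_divLR.
Qed.
Definition blk (J z : nat) (i : 'I_(J * z)) : 'I_J := Ordinal (blk_proof i).

(* I_z(b) = I_z(1)^b, where I_z(1) (circular right shift) has its 1's at
   positions (r, r+1 mod z). *)
Definition circ_entry (z b r c : nat) : 'F_2 :=
  if (c == (r + b) %% z)%N then 1 else 0.

Definition pcm (z J L : nat) (M : model_matrix z J L) : 'M['F_2]_(J * z, L * z) :=
  \matrix_(i, j)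
    match M (blk i) (blk j) return 'F_2 with
    | Some p => circ_entry z p (i %% z)%N (j %% z)%N
    | None => 0
    end.

Definition base_matrix (z J L : nat) (M : model_matrix z J L) : 'M[bool]_(J, L) :=
  \matrix_(i, j) (M i j != None).

Definition code (m n : nat) (H : 'M['F_2]_(m, n)) : {set 'rV['F_2]_n} :=
  [set x : 'rV['F_2]_n | H *m x^T == 0].
Definition dual_code (n : nat) (D : {set 'rV['F_2]_n}) : {set 'rV['F_2]_n} :=
  [set d' : 'rV['F_2]_n | [forall d in D, d *m d'^T == 0]].

Definition hwt (n : nat) (v : 'rV['F_2]_n) : nat := #|[set j | v 0 j != 0]|.
Definition row_weight_count (m n : nat) (H : 'M['F_2]_(m, n)) (w : nat) : nat :=
  #|[set i | hwt (row i H) == w]|.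
Definition same_row_weight_distribution (m1 m2 n1 n2 : nat)
  (H1 : 'M['F_2]_(m1, n1)) (H2 : 'M['F_2]_(m2, n2)) : Prop :=
  forall w : nat, row_weight_count H1 w = row_weight_count H2 w.
Definition col_weight (m n : nat) (H : 'M['F_2]_(m, n)) (j : 'I_n) : nat :=
  #|[set i | H i j != 0]|.

(* Columns 0..L-J-1 : H_b1 (arbitrary); column L-J : h_b; columns
   L-J+1+k (k = 0..J-2) : dual-diagonal H'_b2 with all shifts 0. *)
Definition type_IEEE80216e (z J L : nat) (M : model_matrix z J L) : Prop :=
  (J <= L)%N /\
  (exists (c : 'I_L), val c = (L - J)%N /\
     exists a b : 'I_z, exists j : 'I_J,
       (0 < val j)%N /\ (val j < J.-1)%N /\
       forall r : 'I_J,
         M r c = (if (val r == 0%N) || (val r == J.-1) then Some a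
                  else if r == j then Some b else None)) /\
  (forall (r : 'I_J) (c : 'I_L) (k : nat), val c = (L - J + 1 + k)%N ->
     if (val r == k) || (val r == k.+1)
     then exists p : 'I_z, M r c = Some p /\ val p = 0%N
     else M r c = None).

Definition Hb12_rows : seq (seq nat) :=
  [:: [:: 0;1;1;0;0;0;0;0;1;1;0;0;1;1;0;0;0;0;0;0;0;0;0;0];
      [:: 0;1;0;0;0;1;1;1;0;0;0;1;0;1;1;0;0;0;0;0;0;0;0;0];
      [:: 0;0;0;1;1;1;0;1;0;0;0;1;0;0;1;1;0;0;0;0;0;0;0;0];
      [:: 1;0;1;0;0;0;0;0;1;1;0;0;0;0;0;1;1;0;0;0;0;0;0;0];
      [:: 0;0;1;0;0;0;1;0;0;1;1;0;0;0;0;0;1;1;0;0;0;0;0;0];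
      [:: 0;0;0;0;1;1;0;1;0;0;0;1;1;0;0;0;0;1;1;0;0;0;0;0];
      [:: 0;0;1;1;0;0;0;0;0;1;1;0;0;0;0;0;0;0;1;1;0;0;0;0];
      [:: 0;1;1;0;0;0;1;0;0;1;0;0;0;0;0;0;0;0;0;1;1;0;0;0];
      [:: 1;0;0;0;1;1;0;1;0;0;0;1;0;0;0;0;0;0;0;0;1;1;0;0];
      [:: 0;0;0;0;0;1;0;1;0;0;1;1;0;0;0;0;0;0;0;0;0;1;1;0];
      [:: 0;0;1;1;0;0;0;0;1;1;0;0;0;0;0;0;0;0;0;0;0;0;1;1];
      [:: 1;0;0;0;0;1;0;1;0;0;0;1;1;0;0;0;0;0;0;0;0;0;0;1] ].

Definition Hb12 : 'M[bool]_(12, 24) :=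
  \matrix_(i, j) (nth 0%N (nth [::] Hb12_rows i) j == 1%N).

(* Main.v *)
Require Import Defs.
From mathcomp Require Import all_boot all_algebra.
Set Warnings "-all".
Import GRing.Theory.
Local Open Scope ring_scope.

Lemma sum_block n z (k : 'I_n) (F : nat -> 'F_2) : (0 < z)%N ->
  \sum_(col : 'I_(n*z) | blk col == k) F (col %% z)%N = \sum_(c < z) F c.
Proof.
move=> hz.
rewrite (eq_bigl (fun col : 'I_(n*z) => (col %/ z == k)%N)); last first.
  by move=> col; rewrite -val_eqE.
rewrite -(big_mkord (fun i => i %/ z == k)%N (fun i => F (i %% z)%N)).
have hk : (k * z + z <= n * z)%N by rewrite addnC -mulSn leq_mul2r ltn_ord orbT.
rewrite (big_cat_nat (leq0n (k * z)) (leq_trans (leq_addr z _) hk)).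
rewrite (big_cat_nat (leq_addr z _) hk) /=.
rewrite big_nat_cond big1 ?add0r; last first.
  move=> i /andP[/andP[_ hi] /eqP e]; move: hi; rewrite -ltn_divLR // e.
  by rewrite ltnn.
rewrite [X in _ + X]big_nat_cond [X in _ + X]big1 ?addr0; last first.
  move=> i /andP[/andP[hi _] /eqP e]; move: hi; rewrite addnC -mulSn -leq_divRL // e.
  by rewrite ltnn.
rewrite -{1}[(k * z)%N]add0n big_addn addKn big_mkord.
rewrite big_mkcond /=; apply: eq_bigr => i _.
rewrite addnC divnMDl // divn_small // addn0 eqxx modnMDl modn_small //.
Qed.
Lemma sum_pick z (t : 'I_z) : \sum_(c < z) (if (c == t :> nat) then 1 else 0 : 'F_2) = 1.
Proof.
rewrite (bigD1 t) //= eqxx big1 ?addr0 // => c hc.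
by rewrite ifN // (inj_eq val_inj).
Qed.

Lemma circ_row z p r : (0 < z)%N -> \sum_(c < z) circ_entry z p r c = 1.
Proof.
move=> hz; have ht : ((r + p) %% z < z)%N by rewrite ltn_pmod.
rewrite -(@sum_pick _ (Ordinal ht)); apply: eq_bigr => c _ //.
Qed.

Lemma circ_col z p (c : 'I_z) : \sum_(a < z) circ_entry z p a c = 1.
Proof.
have hz : (0 < z)%N by apply: leq_ltn_trans (ltn_ord c).
pose h (a : 'I_z) : 'I_z := Ordinal (ltn_pmod (a + p) hz).
have hinj : injective h.
  move=> a b /(congr1 val) /= /eqP; rewrite eqn_modDr !modn_small //.
  by move/eqP/val_inj.
rewrite -(@sum_pick _ c) [RHS](reindex_inj hinj) /=; apply: eq_bigr => a _.
by rewrite /circ_entry eq_sym.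
Qed.

Definition fin {z} (o : option 'I_z) : 'F_2 := if o is Some _ then 1 else 0.

Lemma row_block z J L (M : model_matrix z J L) (r : 'I_(J*z)) (k : 'I_L) :
  (0 < z)%N -> \sum_(col : 'I_(L*z) | blk col == k) pcm M r col = fin (M (blk r) k).
Proof.
move=> hz.
pose F c := match M (blk r) k with
   Some p => circ_entry z p (r %% z) c | None => 0 end.
rewrite (eq_bigr (fun col : 'I_(L*z) => F (col %% z)%N)); last first.
  by move=> col /eqP e; rewrite mxE e.
rewrite (@sum_block _ _ k F) // /F; case: (M (blk r) k) => [p|] /=; first exact: circ_row.
by rewrite big1.
Qed.

Lemma col_block z J L (M : model_matrix z J L) (i : 'I_J) (col : 'I_(L*z)) :
  (0 < z)%N -> \sum_(r : 'I_(J*z) | blk r == i) pcm M r col = fin (M i (blk col)).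
Proof.
move=> hz.
pose F a := match M i (blk col) with
   Some p => circ_entry z p a (col %% z) | None => 0 end.
rewrite (eq_bigr (fun r : 'I_(J*z) => F (r %% z)%N)); last first.
  by move=> r /eqP e; rewrite mxE e.
rewrite (@sum_block _ _ i F) // /F; case: (M i (blk col)) => [p|] /=; last by rewrite big1.
exact: (@circ_col _ p (Ordinal (ltn_pmod col hz))).
Qed.

Lemma hwt_le n (v : 'rV['F_2]_n) : (hwt v <= n)%N.
Proof. by rewrite /hwt; apply: leq_trans (max_card _) _; rewrite card_ord. Qed.

Lemma sum_rwc m n (H : 'M['F_2]_(m,n)) :
  (\sum_(w < n.+1) row_weight_count H w)%N = m.
Proof.
rewrite /row_weight_count.
under eq_bigr => w _ do rewrite -sum1_card big_mkcond /=.
rewrite exchange_big /=.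
rewrite -[m in RHS]card_ord -sum1_card.
apply: eq_bigr => i _.
have hi : (hwt (row i H) < n.+1)%N by rewrite ltnS hwt_le.
rewrite (bigD1 (Ordinal hi)) //= inE eqxx big1 ?addn0 // => w hw.
by rewrite inE; case: eqP => // E; case/eqP: hw; apply/val_inj; rewrite /= E.
Qed.

Definition Ip : pred 'I_12 := fun i => (val i \in [:: 0;3;4;7;9;11])%N.

Definition hbn (i k : nat) : bool := nth 0%N (nth [::] Hb12_rows i) k == 1%N.
Definition ysum (k : nat) : nat := (hbn 0 k + hbn 3 k + hbn 4 k + hbn 7 k + hbn 9 k + hbn 11 k)%N.
Lemma ysumE k : (\sum_(i < 12 | Ip i) (hbn i k : nat))%N = ysum k.
Proof.
rewrite big_mkcond !big_ord_recl big_ord0 /= /ysum /bump /= !add0n addn0 !addnA.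
by rewrite addn0.
Qed.
Lemma ysum_odd : all (fun k => odd (ysum k) == (k == 13)%N) (iota 0 14).
Proof. by vm_compute. Qed.

Theorem mainTheorem4 (z : nat) (hz : (0 < z)%N) (MC : model_matrix z 12 24)
  (hC : base_matrix MC = Hb12) :
  ~ exists (J : nat) (MD : model_matrix z J 24),
      [/\ type_IEEE80216e MD,
          same_row_weight_distribution (pcm MC) (pcm MD),
          (forall j, (2 <= col_weight (pcm MD) j)%N)
        & dual_code (code (pcm MD)) \subset code (pcm MC)].
Proof.
move=> [J [MD [ht hrw hcol hsub]]].
have e1 := @sum_rwc _ _ (pcm MC); have e2 := @sum_rwc _ _ (pcm MD).
have e3 : (\sum_(w < (24 * z).+1) row_weight_count (pcm MC) w =
   \sum_(w < (24 * z).+1) row_weight_count (pcm MD) w)%N.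
  by apply: eq_bigr => w _; exact: hrw.
rewrite e3 e2 in e1.
move/eqP: e1; rewrite eqn_pmul2r // => /eqP hJ; subst J.
case: ht => _ [_ hdd].
have hi0 : (0 < 12 * z)%N by rewrite muln_gt0.
pose i0 : 'I_(12 * z) := Ordinal hi0.
pose d := row i0 (pcm MD).
have hd : d \in dual_code (code (pcm MD)).
  rewrite inE; apply/forallP => x; apply/implyP; rewrite inE => /eqP hx.
  apply/eqP; rewrite -[LHS]trmxK trmx_mul trmxK -row_mul hx.
  by apply/matrixP => a b; rewrite !mxE.
have hE : pcm MC *m d^T = 0.
  by move/subsetP: hsub => /(_ d hd); rewrite inE => /eqP.
have T0 : \sum_(i < 12 | Ip i) \sum_(r | blk r == i) (pcm MC *m d^T) r 0 = 0.
  by rewrite hE; apply: big1 => i _; apply: big1 => r _; rewrite mxE.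
pose y (k : 'I_24) := \sum_(i < 12 | Ip i) fin (MC i k).
have T1 : \sum_(i < 12 | Ip i) \sum_(r | blk r == i) (pcm MC *m d^T) r 0 =
          \sum_(k < 24) y k * fin (MD ord0 k).
  under eq_bigr => i _ do under eq_bigr => r _ do rewrite mxE.
  under eq_bigr => i _ do rewrite exchange_big.
  rewrite exchange_big /=.
  under eq_bigr => col _ do under eq_bigr => i _ do rewrite -mulr_suml col_block //.
  under eq_bigr => col _ do rewrite -mulr_suml.
  rewrite (partition_big (fun col => blk col) xpredT) //=.
  apply: eq_bigr => k _.
  rewrite (eq_bigr (fun col => y k * pcm MD i0 col)); last first.
    by move=> col /eqP <-; rewrite !mxE.
  rewrite -mulr_sumr row_block //.
  have -> : blk i0 = ord0 by apply: val_inj; rewrite /= div0n.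
  by [].
have hb : forall i k, Hb12 i k = hbn i k by move=> i k; rewrite mxE.
have Hy : forall k : 'I_24, (k <= 13)%N -> y k = (k == 13 :> nat)%:R.
  move=> k hk; rewrite /y.
  transitivity ((\sum_(i < 12 | Ip i) (hbn i k : nat))%N%:R : 'F_2).
    rewrite natr_sum; apply: eq_bigr => i _.
    by rewrite -hb -hC mxE; case: (MC i k).
  rewrite ysumE -(@Fp_nat_mod 2) // modn2.
  move/allP: ysum_odd => /(_ k); rewrite mem_iota add0n ltnS hk => /(_ isT) /eqP ->.
  by [].
have Hs : \sum_(k < 24) y k * fin (MD ord0 k) = 1.
  rewrite -(@sum_pick 24 (inord 13)); apply: eq_bigr => k _.
  rewrite inordK; last by [].
  case: (ltngtP k 13) => hk.
  - rewrite Hy; last exact: ltnW.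
    by rewrite (ltn_eqF hk) /= mul0r.
  - have := hdd ord0 k (k - 13)%N.
    rewrite /= subnKC; last exact: ltnW.
    move=> /(_ erefl).
    rewrite eq_sym subn_eq0 leqNgt hk /= => ->.
    by rewrite mulr0.
  - rewrite Hy; last by rewrite hk.
    rewrite hk eqxx /= mul1r.
    have := hdd ord0 k 0; rewrite /= hk => /(_ erefl) [p [-> _]].
    by [].
move: T0; rewrite T1 Hs; apply/eqP; exact: oner_neq0.
Qed.
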